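(* Let $G$ be a connected graph and $r\in\mathbb{N}$. Then the $r$-local covering $p_r:G_r\to G$ preserves $(r/2)$-balls.
   Context: Graphs may have loops and parallel edges and are viewed as 1-complexes; a cycle may be a loop or a pair of parallel edges; a closed walk once around a cycle $O$ traverses every edge of $O$ exactly once. $\pi_1^r(G,x_0)$ is the subgroup of $\pi_1(G,x_0)$ generated by the classes of the closed walks $W_0QW_0^-$, with $W_0$ a walk from $x_0$ to a vertex $y$, $Q$ a closed walk at $y$ once around a cycle of length at most $r$, $W_0^-$ the reverse of $W_0$. The $r$-local covering $p_r:G_r\to G$ is the connected normal covering with characteristic subgroup $\pi_1^r(G,x_0)$. For $\varrho\in\mathbb{N}$ and a vertex $v$ of a graph $X$, the ball $B_X(v,\varrho/2)$ is the subgraph formed by the vertices at distance at most $\varrho/2$ from $v$ and all edges $xy$ with $d_X(v,x)+1+d_X(y,v)\le\varrho$. A covering $p:C\to G$ preserves $(\varrho/2)$-balls if for every vertex $v$ of $G$ and every lift $\hat v$ of $v$, $p$ maps $B_C(\hat v,\varrho/2)$ isomorphically onto $B_G(v,\varrho/2)$. *)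

(* Defs.v *)
(* Graphs with loops and parallel edges, encoded by darts
   (oriented edges): each edge {d, rv d} has two distinct orientations;
   a loop is an edge whose two darts have the same tail. *)
From Stdlib Require Import List Arith Relations.
Import ListNotations.

Record graph := mkGraph {
  vert : Type;
  dart : Type;
  tl : dart -> vert;
  rv : dart -> dart;
  rv_invol : forall d, rv (rv d) = d;
  rv_nofix : forall d, rv d <> d }.

Arguments tl {g} d.
Arguments rv {g} d.

Definition hd {G : graph} (d : dart G) : vert G := tl (rv d).

Fixpoint is_walk {G : graph} (x : vert G) (w : list (dart G)) (y : vert G) : Prop :=
  match w with
  | [] => x = y
  | d :: w' => tl d = x /\ is_walk (hd d) w' y
  end.

Definition rev_walk {G : graph} (w : list (dart G)) : list (dart G) :=
  rev (map rv w).

Definition connected (G : graph) : Prop :=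
  forall x y : vert G, exists w, is_walk x w y.

Definition bt_step {G : graph} (x y : vert G) (w w' : list (dart G)) : Prop :=
  is_walk x w y /\ is_walk x w' y /\
  exists a b d, w = a ++ d :: rv d :: b /\ w' = a ++ b.

Definition homotopic {G : graph} (x y : vert G) : relation (list (dart G)) :=
  clos_refl_sym_trans _ (@bt_step G x y).

(* Q is a closed walk once around a cycle: nonempty closed walk whose
   vertices are pairwise distinct and whose edges are pairwise distinct
   (length 1: a loop; length 2: a pair of parallel edges; length >= 3: a cycle). *)
Definition once_around_cycle {G : graph} (Q : list (dart G)) : Prop :=
  Q <> [] /\
  (exists x, is_walk x Q x) /\
  NoDup (map tl Q) /\
  (forall i j di dj, i <> j -> nth_error Q i = Some di -> nth_error Q j = Some dj ->
     di <> dj /\ di <> rv dj).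

Definition pi1r_generator (G : graph) (r : nat) (x0 : vert G) (g : list (dart G)) : Prop :=
  exists (W0 Q : list (dart G)) (y : vert G),
    is_walk x0 W0 y /\ is_walk y Q y /\ once_around_cycle Q /\ length Q <= r /\
    g = W0 ++ Q ++ rev_walk W0.

Definition in_pi1r (G : graph) (r : nat) (x0 : vert G) (W : list (dart G)) : Prop :=
  is_walk x0 W x0 /\
  exists gs : list (list (dart G)),
    Forall (fun g => pi1r_generator G r x0 g \/ pi1r_generator G r x0 (rev_walk g)) gs /\
    homotopic x0 x0 W (concat gs).

Record covering (C G : graph) := mkCovering {
  cv : vert C -> vert G;
  cd : dart C -> dart G;
  cov_tl : forall d, tl (cd d) = cv (tl d);
  cov_rv : forall d, cd (rv d) = rv (cd d);
  cov_surj : forall x, exists c, cv c = x;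
  cov_local : forall (c : vert C) (e : dart G), tl e = cv c ->
      exists d, (tl d = c /\ cd d = e) /\
                (forall d', tl d' = c /\ cd d' = e -> d' = d) }.

Arguments cv {_ _} _ _.
Arguments cd {_ _} _ _.

(* Ball B_X(v, rho/2): vertices x with d(v,x) <= rho/2, and edges xy (dart d
   with tail x, head y) with d(v,x) + 1 + d(y,v) <= rho. *)
Definition ball_vert {X : graph} (v : vert X) (rho : nat) (x : vert X) : Prop :=
  exists w, is_walk v w x /\ 2 * length w <= rho.

Definition ball_dart {X : graph} (v : vert X) (rho : nat) (d : dart X) : Prop :=
  exists a b, is_walk v a (tl d) /\ is_walk (hd d) b v /\
              length a + 1 + length b <= rho.

(* p maps B_C(vh, rho/2) isomorphically onto B_G(v, rho/2) (p being a graph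
   homomorphism, this means: bijectively on vertices and on darts). *)
Definition ball_iso {C G : graph} (p : covering C G) (rho : nat)
    (v : vert G) (vh : vert C) : Prop :=
  (forall x, ball_vert vh rho x -> ball_vert v rho (cv p x)) /\
  (forall x y, ball_vert vh rho x -> ball_vert vh rho y -> cv p x = cv p y -> x = y) /\
  (forall y, ball_vert v rho y -> exists x, ball_vert vh rho x /\ cv p x = y) /\
  (forall d, ball_dart vh rho d -> ball_dart v rho (cd p d)) /\
  (forall d e, ball_dart vh rho d -> ball_dart vh rho e -> cd p d = cd p e -> d = e) /\
  (forall e, ball_dart v rho e -> exists d, ball_dart vh rho d /\ cd p d = e).

Definition preserves_balls {C G : graph} (p : covering C G) (rho : nat) : Prop :=
  forall (v : vert G) (vh : vert C), cv p vh = v -> ball_iso p rho v vh.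

Definition char_subgroup_is_pi1r {C G : graph} (p : covering C G) (c0 : vert C)
    (x0 : vert G) (r : nat) : Prop :=
  forall W, is_walk x0 W x0 ->
    (in_pi1r G r x0 W <->
     exists Wh, is_walk c0 Wh c0 /\ homotopic x0 x0 (map (cd p) Wh) W).

(* Main.v *)
Require Import Defs.
From Stdlib Require Import List Arith Relations Lia Classical.
Import ListNotations.
Local Notation hd := Defs.hd.
Local Notation tl := Defs.tl.

Lemma walk_app {G : graph} (u v : list (dart G)) : forall x z,
  is_walk x (u ++ v) z <-> exists y, is_walk x u y /\ is_walk y v z.
Proof.
  induction u as [|d u IH]; intros x z; simpl.
  - split; [intros H; exists x; auto | intros [y [-> H]]; auto].
  - split.
    + intros [H1 H2]. apply IH in H2. destruct H2 as [y [H3 H4]]. exists y; auto.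
    + intros [y [[H1 H3] H4]]. split; auto. apply IH. eauto.
Qed.

Lemma walk_end {G : graph} (w : list (dart G)) : forall x y1 y2,
  is_walk x w y1 -> is_walk x w y2 -> y1 = y2.
Proof.
  induction w as [|d w IH]; simpl; intros x y1 y2.
  - intros; congruence.
  - intros [_ H1] [_ H2]; eauto.
Qed.

Lemma hd_rv {G : graph} (d : dart G) : hd (rv d) = tl d.
Proof. unfold hd. now rewrite rv_invol. Qed.

Lemma walk_rev {G : graph} (w : list (dart G)) : forall x y,
  is_walk x w y -> is_walk y (rev_walk w) x.
Proof.
  induction w as [|d w IH]; simpl; intros x y.
  - intros ->; reflexivity.
  - intros [H1 H2]. unfold rev_walk; simpl. apply walk_app. exists (hd d). split.
    + apply IH; auto.
    + simpl. split; [reflexivity|]. rewrite hd_rv. auto.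
Qed.

Lemma rev_walk_invol {G : graph} (w : list (dart G)) : rev_walk (rev_walk w) = w.
Proof.
  unfold rev_walk. rewrite map_rev, rev_involutive, map_map.
  rewrite <- (map_id w) at 2. apply map_ext. intros; apply rv_invol.
Qed.

Lemma rev_walk_length {G : graph} (w : list (dart G)) : length (rev_walk w) = length w.
Proof. unfold rev_walk. now rewrite length_rev, length_map. Qed.

Lemma rev_walk_app {G : graph} (u v : list (dart G)) :
  rev_walk (u ++ v) = rev_walk v ++ rev_walk u.
Proof. unfold rev_walk. now rewrite map_app, rev_app_distr. Qed.

Lemma cov_hd {C G} (p : covering C G) d : hd (cd p d) = cv p (hd d).
Proof. unfold hd. rewrite <- (cov_rv _ _ p). apply cov_tl. Qed.

Lemma map_rev_walk {C G} (p : covering C G) w :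
  map (cd p) (rev_walk w) = rev_walk (map (cd p) w).
Proof. unfold rev_walk. rewrite map_rev, !map_map. f_equal. apply map_ext. intros; apply cov_rv. Qed.

Lemma walk_proj {C G} (p : covering C G) wh : forall c c',
  is_walk c wh c' -> is_walk (cv p c) (map (cd p) wh) (cv p c').
Proof.
  induction wh as [|d w IH]; simpl; intros c c'.
  - intros ->; reflexivity.
  - intros [H1 H2]. split.
    + rewrite (cov_tl _ _ p), H1; reflexivity.
    + rewrite cov_hd. apply IH; auto.
Qed.

Lemma lift_ex {C G} (p : covering C G) w : forall x y c, is_walk x w y -> cv p c = x ->
  exists wh c', is_walk c wh c' /\ map (cd p) wh = w.
Proof.
  induction w as [|e w IH]; simpl; intros x y c Hw Hc.
  - exists [], c. simpl; auto.
  - destruct Hw as [H1 H2].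
    destruct (cov_local _ _ p c e) as [d [[Hd1 Hd2] _]]; [congruence|].
    destruct (IH (hd e) y (hd d) H2) as [wh [c' [Hw1 Hw2]]].
    { rewrite <- Hd2. symmetry. apply cov_hd. }
    exists (d :: wh), c'. simpl. split; [split; auto | congruence].
Qed.

Lemma lift_unique {C G} (p : covering C G) w1 : forall w2 c c1 c2,
  is_walk c w1 c1 -> is_walk c w2 c2 -> map (cd p) w1 = map (cd p) w2 -> w1 = w2.
Proof.
  induction w1 as [|d1 w1 IH]; intros [|d2 w2] c c1 c2 H1 H2 Hm; simpl in *; try discriminate; auto.
  injection Hm as Hd Hm'. destruct H1 as [H1a H1b], H2 as [H2a H2b].
  assert (d1 = d2).
  { destruct (cov_local _ _ p c (cd p d1)) as [d [_ Hu]].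
    - rewrite (cov_tl _ _ p), H1a; reflexivity.
    - assert (E1 := Hu d1 (conj H1a eq_refl)).
      assert (E2 := Hu d2 (conj H2a (eq_sym Hd))). congruence. }
  subst d2. f_equal. eapply IH; eauto.
Qed.

Definition LE {C G} (p : covering C G) c w c1 :=
  exists wh, is_walk c wh c1 /\ map (cd p) wh = w.

Lemma LE_unique {C G} (p : covering C G) c w c1 c2 : LE p c w c1 -> LE p c w c2 -> c1 = c2.
Proof.
  intros [w1 [H1 E1]] [w2 [H2 E2]].
  assert (w1 = w2) by (apply (lift_unique p w1 w2 c c1 c2 H1 H2); congruence).
  subst; eapply walk_end; eauto.
Qed.

Lemma LE_app {C G} (p : covering C G) c u v c2 : LE p c (u ++ v) c2 -> exists m, LE p c u m /\ LE p m v c2.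
Proof.
  intros [wh [H E]]. apply map_eq_app in E. destruct E as [l1 [l2 [-> [E1 E2]]]].
  apply walk_app in H. destruct H as [m [H1 H2]]. exists m; split; [exists l1|exists l2]; auto.
Qed.

Lemma app_LE {C G} (p : covering C G) c u v m c2 : LE p c u m -> LE p m v c2 -> LE p c (u ++ v) c2.
Proof.
  intros [w1 [H1 E1]] [w2 [H2 E2]]. exists (w1 ++ w2). split.
  - apply walk_app; eauto.
  - rewrite map_app; congruence.
Qed.

Lemma LE_rev {C G} (p : covering C G) c w c1 : LE p c w c1 -> LE p c1 (rev_walk w) c.
Proof.
  intros [wh [H E]]. exists (rev_walk wh). split; [apply walk_rev; auto | rewrite map_rev_walk, E; auto].
Qed.

Lemma LE_bt {C G} (p : covering C G) x y w w' c c1 :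
  bt_step x y w w' -> cv p c = x -> LE p c w c1 -> LE p c w' c1.
Proof.
  intros [Hw [Hw' [a [b [d [-> ->]]]]]] Hc HL.
  apply LE_app in HL. destruct HL as [m [Ha Hr]].
  destruct Hr as [t [Ht Et]].
  destruct t as [|dh [|eh bh]]; simpl in Et; try discriminate.
  injection Et as E1 E2 E3. simpl in Ht. destruct Ht as [T1 [T2 T3]].
  assert (eh = rv dh).
  { destruct (cov_local _ _ p (hd dh) (rv d)) as [q [_ Hu]].
    - change (hd d = cv p (hd dh)). rewrite <- E1. apply cov_hd.
    - rewrite (Hu eh (conj T2 E2)). symmetry. apply Hu. split; [reflexivity|].
      rewrite (cov_rv _ _ p), E1; reflexivity. }
  subst eh. rewrite hd_rv, T1 in T3.
  eapply app_LE; [exact Ha|]. exists bh; auto.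
Qed.

Lemma hom_walk {G : graph} x y (w w' : list (dart G)) :
  homotopic x y w w' -> (is_walk x w y <-> is_walk x w' y).
Proof. intros H; induction H as [w w' [H1 [H2 _]]| | |]; tauto. Qed.

Lemma LE_hom {C G} (p : covering C G) x y w w' : homotopic x y w w' ->
  forall c, cv p c = x -> is_walk x w y -> forall c1, LE p c w c1 <-> LE p c w' c1.
Proof.
  intros H. induction H as [w w' Hs| w | w w' H IH | w1 w2 w3 H1 IH1 H2 IH2];
    intros c Hc Hw c1.
  - split; [eapply LE_bt; eauto|].
    intros HL. destruct (lift_ex p w x y c Hw Hc) as [wh [c2 [Hwh Ewh]]].
    assert (L2 : LE p c w c2) by (exists wh; auto).
    assert (L2' := LE_bt p x y w w' c c2 Hs Hc L2).
    rewrite (LE_unique p c w' c1 c2 HL L2'). auto.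
  - tauto.
  - symmetry. apply IH; auto. apply (hom_walk _ _ _ _ H); auto.
  - rewrite IH1 by auto. apply IH2; auto. apply (hom_walk _ _ _ _ H1); auto.
Qed.

Lemma hom_cong {G : graph} x y (w w' : list (dart G)) : homotopic x y w w' ->
  forall x' y' a b, is_walk x' a x -> is_walk y b y' ->
  homotopic x' y' (a ++ w ++ b) (a ++ w' ++ b).
Proof.
  intros H. induction H as [w w' Hs| w | w w' H IH | w1 w2 w3 H1 IH1 H2 IH2];
    intros x' y' a b Ha Hb.
  - apply rst_step. destruct Hs as [Hw [Hw' [a0 [b0 [d [-> ->]]]]]].
    split; [|split].
    + apply walk_app; exists x; split; auto. apply walk_app; exists y; auto.
    + apply walk_app; exists x; split; auto. apply walk_app; exists y; auto.
    + exists (a ++ a0), (b0 ++ b), d. split; rewrite <- ?app_assoc; simpl; rewrite <- ?app_assoc; reflexivity.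
  - apply rst_refl.
  - apply rst_sym; apply IH; auto.
  - eapply rst_trans; [apply IH1|apply IH2]; eauto.
Qed.

Lemma hom_cancel {G : graph} (U : list (dart G)) : forall x y,
  is_walk x U y -> homotopic x x (U ++ rev_walk U) [].
Proof.
  induction U as [|d U IH]; intros x y HU.
  - exact (rst_refl _ _ _).
  - destruct HU as [H1 H2].
    replace ((d :: U) ++ rev_walk (d :: U)) with ([d] ++ (U ++ rev_walk U) ++ [rv d])
      by (unfold rev_walk; simpl; rewrite <- !app_assoc; reflexivity).
    apply rst_trans with ([d] ++ [] ++ [rv d]).
    + eapply hom_cong; [eapply IH; eauto | simpl; auto | simpl; split; auto].
      rewrite hd_rv; auto.
    + apply rst_step. split; [|split].
      * simpl. repeat split; auto. rewrite hd_rv; auto.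
      * reflexivity.
      * exists [], [], d. split; reflexivity.
Qed.

Lemma in_hom {G : graph} r x0 (W W' : list (dart G)) :
  in_pi1r G r x0 W' -> homotopic x0 x0 W W' -> in_pi1r G r x0 W.
Proof.
  intros [Hw [gs [HF Hh]]] H. split.
  - apply (hom_walk _ _ _ _ H); auto.
  - exists gs; split; auto. eapply rst_trans; eauto.
Qed.

Lemma in_app {G : graph} r x0 (P1 P2 : list (dart G)) :
  in_pi1r G r x0 P1 -> in_pi1r G r x0 P2 -> in_pi1r G r x0 (P1 ++ P2).
Proof.
  intros [H1 [gs1 [F1 K1]]] [H2 [gs2 [F2 K2]]]. split.
  - apply walk_app; eauto.
  - exists (gs1 ++ gs2). split; [apply Forall_app; auto|].
    rewrite concat_app.
    assert (Hc1 : is_walk x0 (concat gs1) x0) by (apply (hom_walk _ _ _ _ K1); auto).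
    apply rst_trans with (concat gs1 ++ P2).
    + exact (hom_cong _ _ _ _ K1 x0 x0 [] P2 eq_refl H2).
    + pose proof (hom_cong _ _ _ _ K2 x0 x0 (concat gs1) [] Hc1 eq_refl) as H.
      rewrite !app_nil_r in H. exact H.
Qed.

Lemma tl_idx {G : graph} (W : list (dart G)) i j di dj : NoDup (map tl W) ->
  nth_error W i = Some di -> nth_error W j = Some dj -> tl di = tl dj -> i = j.
Proof.
  intros Hnd Hi Hj Ht. apply (proj1 (NoDup_nth_error _) Hnd).
  - rewrite length_map. apply nth_error_Some. congruence.
  - rewrite !nth_error_map, Hi, Hj. simpl. congruence.
Qed.

Lemma cycle_of {G : graph} (W : list (dart G)) y :
  is_walk y W y -> W <> [] -> NoDup (map tl W) ->
  (forall a b d, W <> a ++ d :: rv d :: b) ->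
  (forall d W', W <> d :: W' ++ [rv d]) ->
  once_around_cycle W.
Proof.
  intros Hw Hne Hnd Hbt Hcy. split; [auto|split; [eauto|split; [auto|]]].
  intros i j di dj Hij Hi Hj. split.
  - intros ->. apply Hij. eapply tl_idx; eauto.
  - intros ->.
    destruct (nth_error_split W j Hj) as [A [B [EW HA]]].
    destruct B as [|e B'].
    + subst W. apply walk_app in Hw. destruct Hw as [m [HwA [Ht Hh]]].
      simpl in Hh.
      destruct A as [|d0 A'].
      * simpl in HA. subst j. destruct i as [|i]; [congruence|].
        simpl in Hi. destruct i; discriminate.
      * simpl in HwA. destruct HwA as [T0 _].
        assert (i = 0).
        { eapply tl_idx; [exact Hnd | exact Hi | reflexivity |].
          change (hd dj = tl d0). rewrite T0. exact Hh. }
        subst i. simpl in Hi. injection Hi as Hi.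
        apply (Hcy d0 A'). rewrite Hi, rv_invol. reflexivity.
    + subst W. apply walk_app in Hw. destruct Hw as [m [HwA [Ht [Te _]]]].
      assert (Hn : nth_error (A ++ dj :: e :: B') (S (length A)) = Some e).
      { rewrite nth_error_app2 by lia.
        replace (S (length A) - length A) with 1 by lia. reflexivity. }
      assert (i = S j).
      { eapply tl_idx; [exact Hnd | exact Hi | rewrite <- HA; exact Hn |].
        rewrite Te. reflexivity. }
      subst i. rewrite <- HA in Hi. rewrite Hn in Hi. injection Hi as Hi.
      apply (Hbt A B' dj). rewrite Hi. reflexivity.
Qed.

Lemma conj_walk {G : graph} x0 y (U W : list (dart G)) :
  is_walk x0 U y -> is_walk y W y -> is_walk x0 (U ++ W ++ rev_walk U) x0.
Proof.
  intros HU HW. apply walk_app. exists y. split; auto.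
  apply walk_app. exists y. split; auto. apply walk_rev; auto.
Qed.

Lemma not_nodup_split {G : graph} (W : list (dart G)) : ~ NoDup (map tl W) ->
  exists W1 d1 W2 d2 W3, W = W1 ++ d1 :: W2 ++ d2 :: W3 /\ tl d1 = tl d2.
Proof.
  induction W as [|d W IH]; simpl; intros H.
  - exfalso; apply H; constructor.
  - destruct (classic (In (tl d) (map tl W))) as [Hin|Hnin].
    + apply in_map_iff in Hin. destruct Hin as [d2 [E Hin]].
      apply in_split in Hin. destruct Hin as [W2 [W3 ->]].
      exists [], d, W2, d2, W3. split; auto.
    + destruct IH as [W1 [d1 [W2 [d2 [W3 [-> E]]]]]].
      * intros Hn. apply H. constructor; auto.
      * exists (d :: W1), d1, W2, d2, W3. split; auto.
Qed.

Lemma comb {G : graph} r x0 : forall n (W : list (dart G)) y U,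
  length W <= n -> length W <= r ->
  is_walk y W y -> is_walk x0 U y -> in_pi1r G r x0 (U ++ W ++ rev_walk U).
Proof.
  induction n as [|n IH]; intros W y U Hn Hr HW HU.
  - destruct W; [|simpl in Hn; lia].
    split; [apply (conj_walk x0 y); auto|].
    exists []. split; [constructor|]. exact (hom_cancel U x0 y HU).
  - destruct W as [|d0 W0] eqn:EW.
    { split; [apply (conj_walk x0 y); auto|].
      exists []. split; [constructor|]. exact (hom_cancel U x0 y HU). }
    rewrite <- EW in *.
    destruct (classic (exists a b d, W = a ++ d :: rv d :: b)) as [[a [b [d E]]] | Hbt].
    + assert (HW' : is_walk y (a ++ b) y).
      { rewrite E in HW. apply walk_app in HW. destruct HW as [m [Ha [T1 [T2 T3]]]].
        apply walk_app. exists m. split; auto. rewrite hd_rv, T1 in T3. auto. }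
      assert (Hl : length (a ++ b) < length W) by (rewrite E, !length_app; simpl; lia).
      assert (IH' := IH (a ++ b) y U ltac:(lia) ltac:(lia) HW' HU).
      apply (in_hom _ _ _ _ IH'). apply rst_step. split; [|split].
      * apply (conj_walk x0 y); auto.
      * apply (conj_walk x0 y); auto.
      * exists (U ++ a), (b ++ rev_walk U), d. rewrite E.
        split; rewrite <- ?app_assoc; simpl; rewrite <- ?app_assoc; reflexivity.
    + destruct (classic (exists d W', W = d :: W' ++ [rv d])) as [[d [W' E]] | Hcy].
      * rewrite E in HW. destruct HW as [T1 HW]. apply walk_app in HW.
        destruct HW as [m [HW' [T2 T3]]]. simpl in T3.
        assert (Em : m = hd d) by (rewrite <- T2; reflexivity). subst m.
        assert (Hl : length W' < length W) by (rewrite E; simpl; rewrite length_app; simpl; lia).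
        assert (HU' : is_walk x0 (U ++ [d]) (hd d)).
        { apply walk_app. exists y. split; auto. simpl. split; auto. }
        assert (IH' := IH W' (hd d) (U ++ [d]) ltac:(lia) ltac:(lia) HW' HU').
        replace (U ++ W ++ rev_walk U) with ((U ++ [d]) ++ W' ++ rev_walk (U ++ [d])); auto.
        rewrite rev_walk_app, E. simpl. rewrite <- ?app_assoc. simpl. rewrite <- ?app_assoc. reflexivity.
      * destruct (classic (NoDup (map tl W))) as [Hnd | Hnd].
        -- assert (Hc : once_around_cycle W).
           { apply (cycle_of W y); auto.
             - rewrite EW; discriminate.
             - intros a b d E. apply Hbt. eauto.
             - intros d W' E. apply Hcy. eauto. }
           split; [apply (conj_walk x0 y); auto|].
           exists [U ++ W ++ rev_walk U]. split.
           ++ constructor; [|constructor]. left. exists U, W, y. split; [auto|split; [auto|split; [auto|split; [auto|reflexivity]]]].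
           ++ cbn [concat]. rewrite app_nil_r. apply rst_refl.
        -- destruct (not_nodup_split W Hnd) as [W1 [d1 [W2 [d2 [W3 [E Et]]]]]].
           assert (HW2 := HW). rewrite E in HW2. apply walk_app in HW2.
           destruct HW2 as [m1 [H1 [T1 H2]]]. apply walk_app in H2.
           destruct H2 as [m2 [H3 [T2 H4]]].
           assert (HB : is_walk m1 (d1 :: W2) m1).
           { split; auto. congruence. }
           assert (HCc : is_walk m1 (d2 :: W3) y) by (split; auto; congruence).
           assert (HA1 : is_walk y (W1 ++ d2 :: W3) y) by (apply walk_app; eauto).
           assert (HUW : is_walk x0 (U ++ W1) m1) by (apply walk_app; eauto).
           assert (L1 : length (W1 ++ d2 :: W3) < length W)
             by (rewrite E, !length_app; simpl; rewrite length_app; simpl; lia).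
           assert (L2 : length (d1 :: W2) < length W)
             by (rewrite E, !length_app; simpl; rewrite length_app; simpl; lia).
           assert (I1 := IH (W1 ++ d2 :: W3) y U ltac:(lia) ltac:(lia) HA1 HU).
           assert (I2 := IH (d1 :: W2) m1 (U ++ W1) ltac:(lia) ltac:(lia) HB HUW).
           assert (I := in_app _ _ _ _ I2 I1).
           apply (in_hom _ _ _ _ I).
           set (X := rev_walk (U ++ W1)).
           assert (HX : is_walk m1 X x0) by (apply walk_rev; auto).
           assert (Hcan := hom_cancel X m1 x0 HX).
           assert (Ha : is_walk x0 (U ++ W1 ++ d1 :: W2) m1) by (apply walk_app; exists y; split; auto; apply walk_app; eauto).
           assert (Hb : is_walk m1 ((d2 :: W3) ++ rev_walk U) x0) by (apply walk_app; exists y; split; auto; apply walk_rev; auto).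
           assert (K := hom_cong _ _ _ _ Hcan x0 x0 _ _ Ha Hb).
           apply rst_sym in K.
           replace (U ++ W ++ rev_walk U) with ((U ++ W1 ++ d1 :: W2) ++ [] ++ (d2 :: W3) ++ rev_walk U).
           2:{ rewrite E. simpl. rewrite <- ?app_assoc. simpl. rewrite <- ?app_assoc. reflexivity. }
           replace (((U ++ W1) ++ (d1 :: W2) ++ X) ++ U ++ (W1 ++ d2 :: W3) ++ rev_walk U)
             with ((U ++ W1 ++ d1 :: W2) ++ (X ++ rev_walk X) ++ (d2 :: W3) ++ rev_walk U).
           ++ exact K.
           ++ unfold X. rewrite rev_walk_invol. rewrite <- ?app_assoc. simpl. rewrite <- ?app_assoc. reflexivity.
Qed.

Lemma core {C G} r x0 (p : covering C G) c0 : connected C -> cv p c0 = x0 ->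
  char_subgroup_is_pi1r p c0 x0 r ->
  forall y W yh, is_walk y W y -> length W <= r -> cv p yh = y -> LE p yh W yh.
Proof.
  intros HC Hc0 Hch y W yh HW Hr Hyh.
  destruct (HC c0 yh) as [Z HZ].
  assert (HU : is_walk x0 (map (cd p) Z) y).
  { rewrite <- Hc0, <- Hyh. apply walk_proj; auto. }
  assert (Hin := comb r x0 (length W) W y (map (cd p) Z) (le_n _) Hr HW HU).
  assert (Hcw := conj_walk x0 y _ _ HU HW).
  destruct (proj1 (Hch _ Hcw) Hin) as [Wh [HWh Hh]].
  assert (L0 : LE p c0 (map (cd p) Wh) c0) by (exists Wh; auto).
  assert (HpW : is_walk x0 (map (cd p) Wh) x0) by (rewrite <- Hc0; apply walk_proj; auto).
  apply (proj1 (LE_hom p x0 x0 _ _ Hh c0 Hc0 HpW c0)) in L0.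
  apply LE_app in L0. destruct L0 as [m1 [L1 L2]].
  apply LE_app in L2. destruct L2 as [m2 [L3 L4]].
  assert (LZ : LE p c0 (map (cd p) Z) yh) by (exists Z; auto).
  assert (m1 = yh) by (eapply LE_unique; eauto). subst m1.
  apply LE_rev in L4. rewrite rev_walk_invol in L4.
  assert (m2 = yh) by (eapply LE_unique; eauto). subst m2. exact L3.
Qed.

Lemma dart_eq {C G} (p : covering C G) (d e : dart C) : tl d = tl e -> cd p d = cd p e -> d = e.
Proof.
  intros Ht Hc. destruct (cov_local _ _ p (tl d) (cd p d)) as [q [_ Hu]]; [apply cov_tl|].
  transitivity q; [apply Hu; auto | symmetry; apply Hu; auto].
Qed.

Lemma close {C G} r (p : covering C G) :
  (forall y W yh, is_walk y W y -> length W <= r -> cv p yh = y -> LE p yh W yh) ->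
  forall vh x y a b, is_walk vh a x -> is_walk vh b y -> length a + length b <= r ->
  cv p x = cv p y -> x = y.
Proof.
  intros K vh x y a b Ha Hb Hl E.
  assert (HW : is_walk (cv p vh) (map (cd p) a ++ rev_walk (map (cd p) b)) (cv p vh)).
  { apply walk_app. exists (cv p x). split; [apply walk_proj; auto|].
    rewrite E. apply walk_rev. apply walk_proj; auto. }
  assert (L := K _ _ vh HW ltac:(rewrite length_app, rev_walk_length, !length_map; lia) eq_refl).
  apply LE_app in L. destruct L as [m [L1 L2]].
  assert (m = x) by (eapply LE_unique; [exact L1| exists a; auto]). subst m.
  apply LE_rev in L2. rewrite rev_walk_invol in L2.
  eapply LE_unique; [exact L2| exists b; auto].
Qed.

Theorem lemma4p3 (G C : graph) (r : nat) (x0 : vert G) (p : covering C G) (c0 : vert C) :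
  connected G -> connected C -> cv p c0 = x0 ->
  char_subgroup_is_pi1r p c0 x0 r ->
  preserves_balls p r.
Proof.
  intros _ HC Hc0 Hch v vh Hv.
  assert (K := core r x0 p c0 HC Hc0 Hch).
  split; [|split; [|split; [|split; [|split]]]].
  - intros x [w [Hw Hl]]. exists (map (cd p) w). split.
    + rewrite <- Hv. apply walk_proj; auto.
    + rewrite length_map; auto.
  - intros x y [a [Ha La]] [b [Hb Lb]] E. eapply (close r p K); eauto. lia.
  - intros y [w [Hw Hl]].
    destruct (lift_ex p w v y vh Hw Hv) as [wh [c' [Hwh Ew]]].
    exists c'. split.
    + exists wh. split; auto. rewrite <- Ew, length_map in Hl; auto.
    + apply (walk_proj p) in Hwh. rewrite Ew, Hv in Hwh. eapply walk_end; eauto.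
  - intros d [a [b [Ha [Hb L]]]]. exists (map (cd p) a), (map (cd p) b).
    split; [|split].
    + rewrite (cov_tl _ _ p), <- Hv. apply walk_proj; auto.
    + rewrite cov_hd, <- Hv. apply walk_proj; auto.
    + rewrite !length_map; auto.
  - intros d e [a [b [Ha [Hb L]]]] [a' [b' [Ha' [Hb' L']]]] E.
    destruct (le_lt_dec (length a + length a') r) as [Hl|Hl].
    + apply (dart_eq p); auto.
      eapply (close r p K); eauto. rewrite <- !(cov_tl _ _ p), E; reflexivity.
    + assert (Hh : hd d = hd e).
      { eapply (close r p K); [apply walk_rev; exact Hb | apply walk_rev; exact Hb' | |].
        - rewrite !rev_walk_length; lia.
        - rewrite <- !cov_hd, E; reflexivity. }
      rewrite <- (rv_invol _ d), <- (rv_invol _ e). f_equal.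
      apply (dart_eq p); auto. rewrite !(cov_rv _ _ p), E; reflexivity.
  - intros e [a [b [Ha [Hb L]]]].
    destruct (lift_ex p a v (tl e) vh Ha Hv) as [ah [c [Hah Ea]]].
    assert (Hc : cv p c = tl e).
    { apply (walk_proj p) in Hah. rewrite Ea, Hv in Hah. eapply walk_end; eauto. }
    destruct (cov_local _ _ p c e) as [dh [[Hd1 Hd2] _]]; [auto|].
    assert (Hhd : cv p (hd dh) = hd e) by (rewrite <- cov_hd, Hd2; reflexivity).
    destruct (lift_ex p b (hd e) v (hd dh) Hb Hhd) as [bh [c' [Hbh Eb]]].
    assert (HW : is_walk v (a ++ e :: b) v).
    { apply walk_app. exists (tl e). split; auto. split; auto. }
    assert (L1 := K _ _ vh HW ltac:(rewrite length_app; simpl; lia) Hv).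
    assert (L2 : LE p vh (a ++ e :: b) c').
    { exists (ah ++ dh :: bh). split.
      - apply walk_app. exists c. split; auto. split; auto.
      - rewrite map_app; simpl. congruence. }
    assert (c' = vh) by (eapply LE_unique; eauto). subst c'.
    exists dh. split; auto. exists ah, bh. split; [congruence|split; auto].
    rewrite <- Ea, <- Eb, !length_map in L. lia.
Qed.
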